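(* Let $f:(0,\infty)\to\mathbb R$ be convex, differentiable at $1$, with $f(1)=0$ and $f(0):=\lim_{t\to0^+}f(t)<\infty$, such that $g(t):=\frac{f(t)-f(0)}{t}$ is convex on $(0,\infty)$; assume $f(0)+f'(1)>0$. For $\xi_1\in[0,1)$, $\xi_2\in(1,\infty]$ define $$\kappa(\xi_1,\xi_2):=\sup_{t\in(\xi_1,1)\cup(1,\xi_2)}\frac{f(t)+f'(1)(1-t)}{(t-1)^2}.$$ Let $\mathcal X,\mathcal Y$ be finite or countably infinite, let $P_X\ne Q_X$ be probability mass functions with full support on $\mathcal X$, let $W_{Y|X}$ be a stochastic transformation such that every $y\in\mathcal Y$ has some $x$ with $W_{Y|X}(y|x)>0$, let $P_Y=P_XW_{Y|X}$, $Q_Y=Q_XW_{Y|X}$, and let $\xi_1:=\inf_xP_X(x)/Q_X(x)$, $\xi_2:=\sup_xP_X(x)/Q_X(x)$. Then $$\frac{D_f(P_Y\|Q_Y)}{D_f(P_X\|Q_X)}\le\frac{\kappa(\xi_1,\xi_2)}{f(0)+f'(1)}\cdot\frac{\chi^2(P_Y\|Q_Y)}{\chi^2(P_X\|Q_X)}.$$ Consequently, if $Q_X$ is finitely supported on $\mathcal X$ (and not a point mass), $$\mu_f(Q_X,W_{Y|X})\le\frac{1}{f(0)+f'(1)}\,\kappa\Big(0,\frac1{\min_xQ_X(x)}\Big)\,\mu_{\chi^2}(Q_X,W_{Y|X}).$$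
   Context: $D_f(P\|Q):=\sum_xQ(x)f(P(x)/Q(x))$ is the $f$-divergence; $\chi^2(P\|Q)=\sum_x(P(x)-Q(x))^2/Q(x)$. The contraction coefficient is $\mu_f(Q_X,W_{Y|X}):=\sup\{D_f(P_Y\|Q_Y)/D_f(P_X\|Q_X): D_f(P_X\|Q_X)\in(0,\infty)\}$ with $P_Y=P_XW_{Y|X}$, $Q_Y=Q_XW_{Y|X}$; $\mu_{\chi^2}$ is the same with $f(t)=(t-1)^2$. *)

(* Defs.v *)
From Stdlib Require Import Reals List.
Import ListNotations.
Open Scope R_scope.

Definition sum_list {T : Type} (a : T -> R) (L : list T) : R :=
  fold_right (fun x acc => a x + acc) 0 L.

(* [is_sum a s]: the family (a x)_{x : T} is (unconditionally) summable with
   sum s, i.e. the net of finite partial sums (over finite subsets, ordered by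
   inclusion) converges to s.  For finite T this is the ordinary finite sum;
   for countable T it is the usual (absolutely convergent) series. *)
Definition is_sum {T : Type} (a : T -> R) (s : R) : Prop :=
  forall eps, 0 < eps ->
    exists L : list T, NoDup L /\
      forall L' : list T, NoDup L' -> incl L L' ->
        Rabs (sum_list a L' - s) < eps.

Definition countable (T : Type) : Prop :=
  exists e : T -> nat, forall x y, e x = e y -> x = y.

Definition finite_type (T : Type) : Prop :=
  exists l : list T, NoDup l /\ forall x, In x l.

Definition pmf {T : Type} (P : T -> R) : Prop :=
  (forall x, 0 <= P x) /\ is_sum P 1.

(* stochastic transformation W_{Y|X}; W x y = W(y|x) *)
Definition channel {X Y : Type} (W : X -> Y -> R) : Prop :=
  (forall x y, 0 <= W x y) /\ (forall x, is_sum (W x) 1).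

Definition output {X Y : Type} (P : X -> R) (W : X -> Y -> R) (PY : Y -> R) : Prop :=
  forall y, is_sum (fun x => P x * W x y) (PY y).

Definition convex_pos (f : R -> R) : Prop :=
  forall x y l, 0 < x -> 0 < y -> 0 <= l <= 1 ->
    f (l * x + (1 - l) * y) <= l * f x + (1 - l) * f y.

Definition right_lim0 (f : R -> R) (f0 : R) : Prop :=
  forall eps, 0 < eps -> exists delta, 0 < delta /\
    forall t, 0 < t < delta -> Rabs (f t - f0) < eps.

(* f extended to [0,oo) by continuity at 0: f(0) := f0 *)
Definition fext (f : R -> R) (f0 : R) (t : R) : R :=
  if Rle_dec t 0 then f0 else f t.

Definition fdiv {T : Type} (f : R -> R) (f0 : R) (P Q : T -> R) (D : R) : Prop :=
  is_sum (fun x => Q x * fext f f0 (P x / Q x)) D.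

Definition chi2 {T : Type} (P Q : T -> R) (C : R) : Prop :=
  is_sum (fun x => (P x - Q x) ^ 2 / Q x) C.

Definition is_kappa (f : R -> R) (f1' : R) (Dom : R -> Prop) (k : R) : Prop :=
  is_lub (fun r => exists t, Dom t /\ r = (f t + f1' * (1 - t)) / (t - 1) ^ 2) k.

Definition mu_f_set {X Y : Type} (f : R -> R) (f0 : R) (Q : X -> R)
  (W : X -> Y -> R) (r : R) : Prop :=
  exists (P : X -> R) (PY QY : Y -> R) (DX DY : R),
    pmf P /\ output P W PY /\ output Q W QY /\
    fdiv f f0 P Q DX /\ 0 < DX /\ fdiv f f0 PY QY DY /\ r = DY / DX.

Definition is_mu_f {X Y : Type} (f : R -> R) (f0 : R) (Q : X -> R)
  (W : X -> Y -> R) (mu : R) : Prop := is_lub (mu_f_set f f0 Q W) mu.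

Definition mu_chi2_set {X Y : Type} (Q : X -> R) (W : X -> Y -> R) (r : R) : Prop :=
  exists (P : X -> R) (PY QY : Y -> R) (CX CY : R),
    pmf P /\ output P W PY /\ output Q W QY /\
    chi2 P Q CX /\ 0 < CX /\ chi2 PY QY CY /\ r = CY / CX.

Definition is_mu_chi2 {X Y : Type} (Q : X -> R) (W : X -> Y -> R) (mu : R) : Prop :=
  is_lub (mu_chi2_set Q W) mu.

(* Main.v *)
Require Import Defs.
From Stdlib Require Import Reals List Lra Psatz ClassicalEpsilon Classical.
Import ListNotations.
Open Scope R_scope.

Lemma deq {T : Type} (x y : T) : {x = y} + {x <> y}.
Proof. apply excluded_middle_informative. Qed.

Lemma sum_app {T} (a : T -> R) l1 l2 : sum_list a (l1++l2) = sum_list a l1 + sum_list a l2.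
Proof. induction l1; simpl; [ring| rewrite IHl1; ring]. Qed.
Lemma sum_plus {T} (a b : T -> R) L : sum_list (fun x => a x + b x) L = sum_list a L + sum_list b L.
Proof. induction L; simpl; [ring| rewrite IHL; ring]. Qed.
Lemma sum_scal {T} k (a : T -> R) L : sum_list (fun x => k * a x) L = k * sum_list a L.
Proof. induction L; simpl; [ring| rewrite IHL; ring]. Qed.
Lemma sum_zero {T} (L : list T) : sum_list (fun _ => 0) L = 0.
Proof. induction L; simpl; [ring| rewrite IHL; ring]. Qed.
Lemma sum_le_in {T} (a b : T -> R) L : (forall x, In x L -> a x <= b x) -> sum_list a L <= sum_list b L.
Proof. induction L; simpl; intros H; [lra|]. pose proof (H a0 (or_introl eq_refl)).
  assert (sum_list a L <= sum_list b L) by (apply IHL; auto). lra. Qed.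
Lemma sum_le {T} (a b : T -> R) L : (forall x, a x <= b x) -> sum_list a L <= sum_list b L.
Proof. intros; apply sum_le_in; auto. Qed.
Lemma sum_ext {T} (a b : T -> R) L : (forall x, a x = b x) -> sum_list a L = sum_list b L.
Proof. induction L; simpl; intros H; [lra|]. rewrite H, IHL; auto. Qed.
Lemma sum_nonneg {T} (a : T -> R) L : (forall x, 0 <= a x) -> 0 <= sum_list a L.
Proof. intros H. rewrite <- (sum_zero L). apply sum_le; auto. Qed.

Lemma sum_mono {T} (a : T -> R) (L L' : list T) : (forall x, 0 <= a x) -> NoDup L -> incl L L' -> sum_list a L <= sum_list a L'.
Proof.
  intros Ha HL. revert L'. induction HL as [|x L0 Hx HL0 IH]; intros L' Hinc.
  - simpl. apply sum_nonneg; auto.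
  - assert (Hin : In x L') by (apply Hinc; left; auto).
    destruct (in_split _ _ Hin) as [l1 [l2 ->]].
    assert (H0 : sum_list a L0 <= sum_list a (l1 ++ l2)).
    { apply IH. intros z Hz. assert (H1 : In z (l1 ++ x :: l2)) by (apply Hinc; right; auto).
      apply in_app_or in H1. apply in_or_app. destruct H1 as [H1|[H1|H1]]; auto.
      subst. contradiction. }
    rewrite sum_app in H0. rewrite sum_app. simpl. pose proof (Ha x). lra.
Qed.

Lemma union_list {T} (L1 L2 : list T) : exists L, NoDup L /\ incl L1 L /\ incl L2 L.
Proof. exists (nodup (@deq T) (L1 ++ L2)). split. apply NoDup_nodup.
  split; intros z Hz; apply nodup_In; apply in_or_app; auto. Qed.

Lemma is_sum_nonneg_char {T} (a : T -> R) s : (forall x, 0 <= a x) ->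
  is_sum a s <-> ((forall L, NoDup L -> sum_list a L <= s) /\
                  (forall eps, 0 < eps -> exists L, NoDup L /\ s - eps < sum_list a L)).
Proof.
  intros Ha; split.
  - intros H; split.
    + intros L HL. apply Rnot_lt_le; intro Hlt.
      destruct (H (sum_list a L - s)) as [L0 [HL0 H0]]; [lra|].
      destruct (union_list L L0) as [L' [HL' [H1 H2]]].
      specialize (H0 L' HL' H2). pose proof (sum_mono a L L' Ha HL H1).
      apply Rabs_def2 in H0. lra.
    + intros eps Heps. destruct (H eps Heps) as [L0 [HL0 H0]].
      exists L0; split; auto. specialize (H0 L0 HL0 (incl_refl _)). apply Rabs_def2 in H0. lra.
  - intros [Hub Hlb] eps Heps. destruct (Hlb eps Heps) as [L0 [HL0 H0]].
    exists L0; split; auto. intros L' HL' Hinc.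
    pose proof (sum_mono a L0 L' Ha HL0 Hinc). pose proof (Hub L' HL').
    apply Rabs_def1; lra.
Qed.

Lemma is_sum_partial {T} (a : T -> R) s L : (forall x, 0 <= a x) -> is_sum a s -> NoDup L -> sum_list a L <= s.
Proof. intros Ha H HL. apply (proj1 (is_sum_nonneg_char a s Ha) H); auto. Qed.
Lemma is_sum_approx {T} (a : T -> R) s eps : (forall x, 0 <= a x) -> is_sum a s -> 0 < eps ->
  exists L, NoDup L /\ s - eps < sum_list a L.
Proof. intros Ha H He. apply (proj1 (is_sum_nonneg_char a s Ha) H); auto. Qed.

Lemma is_sum_plus {T} (a b : T -> R) s t : is_sum a s -> is_sum b t -> is_sum (fun x => a x + b x) (s + t).
Proof.
  intros Ha Hb eps Heps.
  destruct (Ha (eps/2)) as [La [HLa Ha']]; [lra|].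
  destruct (Hb (eps/2)) as [Lb [HLb Hb']]; [lra|].
  destruct (union_list La Lb) as [L [HL [H1 H2]]].
  exists L; split; auto. intros L' HL' Hinc.
  specialize (Ha' L' HL' (incl_tran H1 Hinc)). specialize (Hb' L' HL' (incl_tran H2 Hinc)).
  rewrite sum_plus. apply Rabs_def2 in Ha'. apply Rabs_def2 in Hb'. apply Rabs_def1; lra.
Qed.

Lemma is_sum_scal {T} (a : T -> R) k s : is_sum a s -> is_sum (fun x => k * a x) (k * s).
Proof.
  intros Ha eps Heps.
  destruct (Ha (eps / (Rabs k + 1))) as [L [HL H]].
  { apply Rdiv_lt_0_compat; [lra| pose proof (Rabs_pos k); lra]. }
  exists L; split; auto. intros L' HL' Hinc. specialize (H L' HL' Hinc).
  rewrite sum_scal. replace (k * sum_list a L' - k * s) with (k * (sum_list a L' - s)) by ring.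
  rewrite Rabs_mult.
  pose proof (Rabs_pos k). pose proof (Rabs_pos (sum_list a L' - s)).
  apply Rle_lt_trans with ((Rabs k + 1) * Rabs (sum_list a L' - s)). nra.
  apply (Rmult_lt_compat_l (Rabs k + 1)) in H; [|lra].
  replace ((Rabs k + 1) * (eps / (Rabs k + 1))) with eps in H by (field; lra). exact H.
Qed.

Lemma is_sum_ext {T} (a b : T -> R) s : (forall x, a x = b x) -> is_sum a s -> is_sum b s.
Proof. intros He H eps Heps. destruct (H eps Heps) as [L [HL H']]. exists L; split; auto.
  intros L' HL' Hi. rewrite <- (sum_ext a b L' He). auto. Qed.

Lemma is_sum_le {T} (a b : T -> R) s t : (forall x, a x <= b x) -> is_sum a s -> is_sum b t -> s <= t.
Proof.
  intros Hab Ha Hb. apply Rnot_lt_le; intro Hlt.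
  destruct (Ha ((s - t)/2)) as [La [HLa Ha']]; [lra|].
  destruct (Hb ((s - t)/2)) as [Lb [HLb Hb']]; [lra|].
  destruct (union_list La Lb) as [L [HL [H1 H2]]].
  specialize (Ha' L HL H1). specialize (Hb' L HL H2). pose proof (sum_le a b L Hab).
  apply Rabs_def2 in Ha'. apply Rabs_def2 in Hb'. lra.
Qed.

Lemma is_sum_zero {T} : is_sum (fun _ : T => 0) 0.
Proof. intros eps Heps; exists []; split; [constructor|]. intros L' _ _.
  rewrite sum_zero. rewrite Rminus_0_r, Rabs_R0. auto. Qed.

Lemma is_sum_minus {T} (a b : T -> R) s t : is_sum a s -> is_sum b t -> is_sum (fun x => a x - b x) (s - t).
Proof. intros Ha Hb. pose proof (is_sum_plus _ _ _ _ Ha (is_sum_scal b (-1) t Hb)) as H.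
  replace (s - t) with (s + -1 * t) by ring. eapply is_sum_ext; [|exact H]. intro x; simpl; ring.
Qed.

Lemma is_sum_ge0 {T} (a : T -> R) s : (forall x, 0 <= a x) -> is_sum a s -> 0 <= s.
Proof. intros Ha H. apply (is_sum_le (fun _ => 0) a); auto. apply is_sum_zero. Qed.

Lemma is_sum_pos {T} (a : T -> R) s x0 : (forall x, 0 <= a x) -> is_sum a s -> a x0 <= s.
Proof. intros Ha H. assert (HN : NoDup [x0]) by (constructor; [intros []|constructor]).
  pose proof (is_sum_partial a s [x0] Ha H HN). simpl in H0. lra. Qed.

Lemma is_sum_finite {T} (a : T -> R) l : (forall x, 0 <= a x) -> NoDup l -> (forall x, In x l) -> is_sum a (sum_list a l).
Proof.
  intros Ha Hl Hall. apply is_sum_nonneg_char; auto. split.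
  - intros L HL. apply sum_mono; auto. intros z _; auto.
  - intros eps Heps. exists l; split; auto; lra.
Qed.

Lemma is_sum_exists_bounded {T} (a : T -> R) M : (forall x, 0 <= a x) -> (forall L, NoDup L -> sum_list a L <= M) -> exists s, is_sum a s.
Proof.
  intros Ha HM.
  set (E := fun r => exists L, NoDup L /\ r = sum_list a L).
  assert (Hb : bound E) by (exists M; intros r [L [HL ->]]; auto).
  assert (He : exists r, E r) by (exists 0; exists []; split; [constructor| reflexivity]).
  destruct (completeness E Hb He) as [s [Hub Hlub]].
  exists s. apply is_sum_nonneg_char; auto. split.
  - intros L HL. apply Hub. exists L; auto.
  - intros eps Heps. apply NNPP; intro Hn.
    assert (H : is_upper_bound E (s - eps)).
    { intros r [L [HL ->]]. apply Rnot_lt_le. intro Hlt. apply Hn. exists L; auto. }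
    specialize (Hlub _ H). lra.
Qed.

Lemma sum_comm {A B} (F : A -> B -> R) (La : list A) (Lb : list B) :
  sum_list (fun y => sum_list (fun x => F x y) La) Lb = sum_list (fun x => sum_list (fun y => F x y) Lb) La.
Proof.
  induction La as [|a0 La IH]; simpl.
  - apply sum_zero.
  - rewrite <- IH. apply (sum_plus (fun y => F a0 y) (fun y => sum_list (fun x => F x y) La)).
Qed.

Lemma is_sum_list {A B} (F : A -> B -> R) (S : B -> R) (Lb : list B) :
  (forall y, is_sum (fun x => F x y) (S y)) -> is_sum (fun x => sum_list (fun y => F x y) Lb) (sum_list S Lb).
Proof.
  intros H. induction Lb as [|b0 Lb IH]; simpl.
  - apply is_sum_zero.
  - apply (is_sum_plus (fun x => F x b0) (fun x => sum_list (fun y => F x y) Lb)); auto.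
Qed.

Lemma tonelli {X Y} (a : X -> R) (W : X -> Y -> R) (b : Y -> R) A :
  (forall x, 0 <= a x) -> is_sum a A -> channel W ->
  (forall y, is_sum (fun x => a x * W x y) (b y)) -> is_sum b A.
Proof.
  intros Ha HA [HW0 HW1] Hb.
  assert (Hnn : forall y x, 0 <= a x * W x y) by (intros; apply Rmult_le_pos; auto).
  assert (Hb0 : forall y, 0 <= b y).
  { intro y. apply (is_sum_ge0 (fun x => a x * W x y)); auto. }
  assert (HA0 : 0 <= A) by (apply (is_sum_ge0 a); auto).
  apply is_sum_nonneg_char; auto. split.
  - intros Ly HLy.
    pose proof (is_sum_list (fun x y => a x * W x y) b Ly Hb) as H.
    refine (is_sum_le _ a _ _ _ H HA).
    intro x. simpl. rewrite sum_scal.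
    pose proof (is_sum_partial (W x) 1 Ly (HW0 x) (HW1 x) HLy). pose proof (Ha x). nra.
  - intros eps Heps.
    destruct (Rle_lt_dec eps A) as [Hle|Hlt].
    2:{ exists []; split; [constructor|]. simpl. lra. }
    set (eta := eps / (2 * (A + 1))).
    assert (Heta : 0 < eta) by (unfold eta; apply Rdiv_lt_0_compat; lra).
    assert (Heta2 : eta * (2*(A+1)) = eps) by (unfold eta; field; lra).
    destruct (is_sum_approx a A eta Ha HA Heta) as [Lx [HLx HLxs]].
    assert (Hy : exists Ly, NoDup Ly /\ forall x, In x Lx -> 1 - eta < sum_list (W x) Ly).
    { clear HLx HLxs. induction Lx as [|x Lx IH].
      - exists []; split; [constructor| intros x []].
      - destruct IH as [L1 [HL1 H1]].
        destruct (is_sum_approx (W x) 1 eta (HW0 x) (HW1 x) Heta) as [L2 [HL2 H2]].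
        destruct (union_list L1 L2) as [L [HL [I1 I2]]].
        exists L; split; auto. intros z [<-|Hz].
        + pose proof (sum_mono (W x) L2 L (HW0 x) HL2 I2). lra.
        + pose proof (H1 z Hz). pose proof (sum_mono (W z) L1 L (HW0 z) HL1 I1). lra. }
    destruct Hy as [Ly [HLy HLyW]].
    exists Ly; split; auto.
    assert (H1 : sum_list (fun y => sum_list (fun x => a x * W x y) Lx) Ly <= sum_list b Ly).
    { apply sum_le. intro y. apply (is_sum_partial (fun x => a x * W x y)); auto. }
    rewrite sum_comm in H1.
    assert (H2 : sum_list (fun x => (1 - eta) * a x) Lx <= sum_list (fun x => sum_list (fun y => a x * W x y) Ly) Lx).
    { apply sum_le_in. intros x Hx. rewrite sum_scal. pose proof (HLyW x Hx). pose proof (Ha x). nra. }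
    rewrite sum_scal in H2.
    assert (eta < 1/2).
    { apply (Rmult_lt_reg_r (2*(A+1))); [lra|]. rewrite Heta2. lra. }
    nra.
Qed.

Lemma convex_tangent (g : R -> R) d : convex_pos g -> derivable_pt_lim g 1 d ->
  forall t, 0 < t -> g 1 + d * (t - 1) <= g t.
Proof.
  intros Hc Hd t Ht.
  destruct (Req_dec t 1) as [->|Ht1]; [lra|].
  apply Rnot_lt_le; intro Hlt.
  set (gap := g 1 + d*(t-1) - g t).
  assert (Hgap: 0 < gap) by (unfold gap; lra).
  assert (Hat : 0 < Rabs (t - 1)) by (apply Rabs_pos_lt; lra).
  destruct (Hd (gap / (2 * Rabs (t-1)))) as [del Hdel].
  { apply Rdiv_lt_0_compat; lra. }
  set (l := Rmin (1/2) (del / (2 * Rabs (t-1)))).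
  assert (Hl0 : 0 < l). { unfold l. apply Rmin_glb_lt; [lra|]. apply Rdiv_lt_0_compat; [apply cond_pos| lra]. }
  assert (Hl1 : l <= 1/2) by apply Rmin_l.
  assert (Hl2 : l <= del / (2 * Rabs (t-1))) by apply Rmin_r.
  set (h := l * (t - 1)).
  assert (Hh0 : h <> 0). { unfold h. apply Rmult_integral_contrapositive; split; lra. }
  assert (Hhd : Rabs h < del).
  { unfold h. rewrite Rabs_mult, (Rabs_right l) by lra.
    apply Rle_lt_trans with (del / (2 * Rabs (t-1)) * Rabs (t-1)). apply Rmult_le_compat_r; [lra|auto].
    replace (del / (2 * Rabs (t - 1)) * Rabs (t - 1)) with (del/2) by (field; lra). pose proof (cond_pos del); lra. }
  specialize (Hdel h Hh0 Hhd).
  pose proof (Hc t 1 l Ht ltac:(lra) ltac:(lra)) as Hcv.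
  replace (l * t + (1 - l) * 1) with (1 + h) in Hcv by (unfold h; ring).
  set (q := (g (1 + h) - g 1) / h) in Hdel.
  assert (Hq : g (1 + h) - g 1 = q * h) by (unfold q; field; auto).
  assert (Hq2 : l * (q * (t-1)) <= l * (g t - g 1)).
  { replace (l * (q * (t-1))) with (q * h) by (unfold h; ring). lra. }
  apply Rmult_le_reg_l in Hq2; [|lra].
  pose proof (Rle_abs ((d - q)*(t-1))) as Ha. rewrite Rabs_mult, Rabs_minus_sym in Ha.
  assert (Hb : Rabs (q - d) * Rabs (t - 1) < gap / 2).
  { apply (Rmult_lt_compat_r (Rabs (t-1))) in Hdel; [|lra].
    replace (gap / (2 * Rabs (t - 1)) * Rabs (t - 1)) with (gap/2) in Hdel by (field; lra). exact Hdel. }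
  unfold gap in *. lra.
Qed.

Lemma g_deriv f f0 f1' : derivable_pt_lim f 1 f1' -> f 1 = 0 -> derivable_pt_lim (fun t => (f t - f0) / t) 1 (f1' + f0).
Proof.
  intros Hd Hf1.
  assert (H1 : derivable_pt_lim (fun t => f t - f0) 1 f1').
  { replace f1' with (f1' - 0) by ring. apply (derivable_pt_lim_minus f (fun _ => f0)); auto. apply derivable_pt_lim_const. }
  pose proof (derivable_pt_lim_div (fun t => f t - f0) id 1 f1' 1 H1 (derivable_pt_lim_id 1) ltac:(unfold id; lra)) as H2.
  unfold div_fct, id in H2. rewrite Hf1 in H2.
  replace (f1' + f0) with ((f1' * 1 - 1 * (0 - f0)) / 1²) by (unfold Rsqr; field). exact H2.
Qed.

Lemma phi_lower f f0 f1' : derivable_pt_lim f 1 f1' -> f 1 = 0 ->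
  convex_pos (fun t => (f t - f0) / t) ->
  forall t, 0 < t -> (f0 + f1') * (t - 1)^2 <= f t + f1' * (1 - t).
Proof.
  intros Hd Hf1 Hg t Ht.
  pose proof (convex_tangent _ _ Hg (g_deriv f f0 f1' Hd Hf1) t Ht) as H.
  simpl in H. rewrite Hf1 in H.
  replace ((0 - f0) / 1) with (- f0) in H by field.
  apply (Rmult_le_compat_r t) in H; [|lra].
  replace ((f t - f0) / t * t) with (f t - f0) in H by (field; lra).
  nra.
Qed.

Lemma convex_lsc (p : R -> R) r : convex_pos p -> 0 < r -> exists K, 0 <= K /\ forall t, 0 < t -> p r - K * Rabs (t - r) <= p t.
Proof.
  intros Hc Hr.
  set (m1 := (p r - p (r/2)) / (r/2)).
  set (m2 := p r - p (r+1)).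
  assert (Hm1 : m1 * (r/2) = p r - p (r/2)) by (unfold m1; field; lra).
  pose proof (Rabs_pos m1) as A1; pose proof (Rabs_pos m2) as A2.
  pose proof (Rle_abs m1) as A3; pose proof (Rle_abs (-m1)) as A4; pose proof (Rle_abs m2) as A5; pose proof (Rle_abs (-m2)) as A6.
  rewrite Rabs_Ropp in A4, A6.
  exists (Rabs m1 + Rabs m2). split. lra.
  intros t Ht. destruct (Rtotal_order t r) as [Hlt|[Heq|Hgt]].
  - set (l := 1 / (r + 1 - t)).
    pose proof (Hc t (r+1) l Ht ltac:(lra)) as H.
    assert (0 <= l <= 1).
    { unfold l. split. apply Rlt_le, Rdiv_lt_0_compat; lra.
      apply (Rmult_le_reg_r (r+1-t)); [lra|]. replace (1 / (r + 1 - t) * (r + 1 - t)) with 1 by (field; lra). lra. }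
    specialize (H H0).
    replace (l*t + (1-l)*(r+1)) with r in H by (unfold l; field; lra).
    assert (e1 : (r+1-t) * (l * p t + (1-l)*p (r+1)) = p t + (r-t)*p (r+1)) by (unfold l; field; lra).
    apply (Rmult_le_compat_l (r+1-t)) in H; [|lra]. rewrite e1 in H.
    rewrite (Rabs_left (t - r)) by lra.
    assert (0 <= (r - t) * Rabs m1) by (apply Rmult_le_pos; lra).
    assert (0 <= (r - t) * (m2 + Rabs m2)) by (apply Rmult_le_pos; lra).
    unfold m2 in *. nra.
  - subst. replace (r - r) with 0 by ring. rewrite Rabs_R0. lra.
  - set (l := (t - r) / (t - r/2)).
    pose proof (Hc (r/2) t l ltac:(lra) Ht) as H.
    assert (0 <= l <= 1).
    { unfold l. split. apply Rlt_le, Rdiv_lt_0_compat; lra.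
      apply (Rmult_le_reg_r (t - r/2)); [lra|]. replace ((t - r) / (t - r / 2) * (t - r / 2)) with (t - r) by (field; lra). lra. }
    specialize (H H0).
    replace (l*(r/2) + (1-l)*t) with r in H by (unfold l; field; lra).
    assert (e1 : (t - r/2) * (l * p (r/2) + (1-l)* p t) = (t - r) * p (r/2) + (r/2) * p t) by (unfold l; field; lra).
    apply (Rmult_le_compat_l (t - r/2)) in H; [|lra]. rewrite e1 in H.
    rewrite (Rabs_right (t - r)) by lra.
    assert (0 <= (t - r) * Rabs m2) by (apply Rmult_le_pos; lra).
    assert (0 <= (t - r) * (m1 + Rabs m1)) by (apply Rmult_le_pos; lra).
    assert (r/2 * (p t - p r - (t - r) * m1) >= 0).
    { replace (r/2 * (p t - p r - (t - r) * m1)) with (r/2 * p t - r/2 * p r - (t-r) * (m1 * (r/2))) by ring.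
      rewrite Hm1. lra. }
    assert (p t - p r - (t - r) * m1 >= 0).
    { apply Rle_ge. apply (Rmult_le_reg_l (r/2)); [lra|]. lra. }
    nra.
Qed.

Lemma endpoint (p : R -> R) (k r : R) : convex_pos p -> 0 < r -> r <> 1 -> (forall t, 0 < t -> 0 <= p t) ->
  (forall t, (r < t < 1 \/ 1 < t < r) -> p t <= k * (t - 1)^2) -> p r <= k * (r - 1)^2.
Proof.
  intros Hc Hr Hr1 Hp Hk.
  assert (Hk0 : 0 <= k).
  { set (t0 := (r+1)/2). assert (Ht0: r < t0 < 1 \/ 1 < t0 < r) by (unfold t0; destruct (Rtotal_order r 1) as [?|[?|?]]; lra).
    pose proof (Hk t0 Ht0). pose proof (Hp t0 ltac:(unfold t0; lra)).
    assert (0 < (t0 - 1)^2) by (unfold t0; destruct (Rtotal_order r 1) as [?|[?|?]]; nra). nra. }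
  destruct (convex_lsc p r Hc Hr) as [K [HK HKt]].
  apply Rnot_lt_le; intro Hlt.
  set (e := p r - k*(r-1)^2).
  assert (He : 0 < e) by (unfold e; lra).
  assert (Ha : 0 < Rabs (1 - r)) by (apply Rabs_pos_lt; lra).
  set (del := Rmin (Rabs (1 - r) / 2) (e / (2 * (K + 1)))).
  assert (Hd0 : 0 < del). { unfold del. apply Rmin_glb_lt; apply Rdiv_lt_0_compat; lra. }
  assert (Hd1 : del <= Rabs (1 - r) / 2) by apply Rmin_l.
  assert (Hd2 : del <= e / (2 * (K + 1))) by apply Rmin_r.
  assert (Hd3 : del * (2 * (K+1)) <= e).
  { apply (Rmult_le_compat_r (2*(K+1))) in Hd2; [|lra].
    replace (e / (2 * (K + 1)) * (2 * (K + 1))) with e in Hd2 by (field; lra). lra. }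
  destruct (Rlt_dec r 1) as [Hr1'|Hr1'].
  - rewrite Rabs_right in Hd1 by lra.
    set (t := r + del).
    pose proof (Hk t ltac:(left; unfold t; lra)).
    pose proof (HKt t ltac:(unfold t; lra)).
    replace (t - r) with del in H0 by (unfold t; ring). rewrite Rabs_right in H0 by lra.
    assert ((t - 1)^2 <= (r-1)^2) by (unfold t; nra).
    assert (k * (t-1)^2 <= k * (r-1)^2) by (apply Rmult_le_compat_l; auto).
    unfold e in *. nra.
  - rewrite Rabs_left in Hd1 by lra.
    set (t := r - del).
    pose proof (Hk t ltac:(right; unfold t; lra)).
    pose proof (HKt t ltac:(unfold t; lra)).
    replace (t - r) with (- del) in H0 by (unfold t; ring). rewrite Rabs_Ropp, Rabs_right in H0 by lra.
    assert ((t - 1)^2 <= (r-1)^2) by (unfold t; nra).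
    assert (k * (t-1)^2 <= k * (r-1)^2) by (apply Rmult_le_compat_l; auto).
    unfold e in *. nra.
Qed.

Lemma alg1 p q : 0 < q -> (p - q)^2 / q = q * (p/q - 1)^2.
Proof. intros; field; lra. Qed.

Lemma pt_lower (f : R -> R) f0 f1' p q :
  (forall t, 0 < t -> (f0 + f1') * (t - 1)^2 <= f t + f1' * (1 - t)) -> 0 <= p -> 0 < q ->
  (f0 + f1') * ((p - q)^2 / q) <= q * fext f f0 (p/q) + f1' * (q - p).
Proof.
  intros Hl Hp Hq. rewrite alg1 by auto.
  unfold fext. destruct (Rle_dec (p/q) 0) as [H|H].
  - assert (p / q = 0). { assert (0 <= p/q) by (apply Rmult_le_pos; [lra| apply Rlt_le, Rinv_0_lt_compat; lra]). lra. }
    assert (p = 0). { replace p with (p/q*q) by (field; lra). rewrite H0; ring. }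
    rewrite H0, H1. nra.
  - assert (Ht : 0 < p / q) by lra. specialize (Hl _ Ht).
    apply (Rmult_le_compat_l q) in Hl; [|lra].
    replace (q * (f (p / q) + f1' * (1 - p / q))) with (q * f (p/q) + f1' * (q - p)) in Hl by (field; lra).
    lra.
Qed.

Lemma pt_upper (f : R -> R) f0 f1' k p q : 0 < q ->
  fext f f0 (p/q) + f1' * (1 - p/q) <= k * (p/q - 1)^2 ->
  q * fext f f0 (p/q) <= k * ((p - q)^2 / q) + f1' * (p - q).
Proof.
  intros Hq H. rewrite alg1 by auto.
  apply (Rmult_le_compat_l q) in H; [|lra].
  replace (q * (fext f f0 (p / q) + f1' * (1 - p / q))) with (q * fext f f0 (p/q) + f1' * (q - p)) in H by (field; lra).
  nra.
Qed.

Lemma wavg_gen {X} (A B W' : X -> R) Sa Sb :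
  (forall x, 0 <= W' x) -> (exists x0, 0 < W' x0) ->
  is_sum (fun x => A x * W' x) Sa -> is_sum (fun x => B x * W' x) Sb -> Sa = Sb ->
  (forall x, B x < A x) -> False.
Proof.
  intros HW [x0 Hx0] HA HB Heq Hlt.
  pose proof (is_sum_minus _ _ _ _ HA HB) as H.
  assert (Hnn : forall x, 0 <= A x * W' x - B x * W' x).
  { intro x. pose proof (HW x); pose proof (Hlt x). nra. }
  pose proof (is_sum_pos _ _ x0 Hnn H). simpl in H0. pose proof (Hlt x0). nra.
Qed.

Lemma kappa_pt (f : R -> R) f1' Dom k t : is_kappa f f1' Dom k -> Dom t -> t <> 1 ->
  f t + f1' * (1 - t) <= k * (t - 1)^2.
Proof.
  intros [Hub _] HD Ht.
  specialize (Hub _ (ex_intro _ t (conj HD eq_refl))).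
  assert (0 < (t-1)^2) by (destruct (Rtotal_order t 1) as [?|[?|?]]; nra).
  apply (Rmult_le_compat_r ((t-1)^2)) in Hub; [|lra].
  replace ((f t + f1' * (1 - t)) / (t - 1) ^ 2 * (t - 1) ^ 2) with (f t + f1' * (1 - t)) in Hub by (field; lra).
  lra.
Qed.

Lemma final_arith DY DX CY CX k c : 0 < c -> 0 < CX -> c*CX <= DX -> DY <= k*CY -> 0 <= k -> 0 <= CY ->
  DY/DX <= k/c*(CY/CX).
Proof.
  intros Hc HCX H1 H2 Hk HCY.
  assert (HDX : 0 < DX) by nra.
  set (z := k/c*(CY/CX)).
  assert (Hz : z * (c*CX) = k*CY) by (unfold z; field; lra).
  assert (Hz0 : 0 <= z) by (unfold z; apply Rmult_le_pos; [apply Rmult_le_pos; [lra| apply Rlt_le, Rinv_0_lt_compat; lra] | apply Rmult_le_pos; [lra| apply Rlt_le, Rinv_0_lt_compat; lra]]).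
  apply (Rmult_le_reg_r DX); [lra|].
  replace (DY / DX * DX) with DY by (field; lra).
  assert (z * (c*CX) <= z * DX) by (apply Rmult_le_compat_l; auto). lra.
Qed.

Lemma convex_phi (f : R -> R) f1' : convex_pos f -> convex_pos (fun t => f t + f1' * (1 - t)).
Proof. intros H x y l Hx Hy Hl. pose proof (H x y l Hx Hy Hl). nra. Qed.

Theorem theorem3 (f : R -> R) (f0 f1' : R)
  (Hconv : convex_pos f)
  (Hder : derivable_pt_lim f 1 f1')
  (Hf1 : f 1 = 0)
  (Hf0 : right_lim0 f f0)
  (Hg : convex_pos (fun t => (f t - f0) / t))
  (Hpos : 0 < f0 + f1') :
  (* Part 1: the ratio inequality *)
  (forall (X Y : Type) (P Q : X -> R) (W : X -> Y -> R)
     (PY QY : Y -> R) (DX DY CX CY kappa : R),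
     countable X -> countable Y ->
     pmf P -> pmf Q ->
     (forall x, 0 < P x) -> (forall x, 0 < Q x) ->
     (exists x, P x <> Q x) ->
     channel W -> (forall y, exists x, 0 < W x y) ->
     output P W PY -> output Q W QY ->
     fdiv f f0 P Q DX -> fdiv f f0 PY QY DY ->
     chi2 P Q CX -> chi2 PY QY CY ->
     is_kappa f f1'
       (fun t => (t < 1 /\ exists x, P x / Q x < t) \/
                 (1 < t /\ exists x, t < P x / Q x)) kappa ->
     DY / DX <= kappa / (f0 + f1') * (CY / CX))
  /\
  (forall (X Y : Type) (Q : X -> R) (W : X -> Y -> R) (qmin kappa mu_f mu_chi : R),
     finite_type X -> countable Y ->
     pmf Q -> (forall x, 0 < Q x) -> ~ (exists x, Q x = 1) ->
     channel W -> (forall y, exists x, 0 < W x y) ->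
     (exists x, Q x = qmin) -> (forall x, qmin <= Q x) ->
     is_kappa f f1' (fun t => (0 < t < 1) \/ (1 < t < 1 / qmin)) kappa ->
     is_mu_f f f0 Q W mu_f -> is_mu_chi2 Q W mu_chi ->
     mu_f <= 1 / (f0 + f1') * kappa * mu_chi).
Proof.
  pose proof (phi_lower f f0 f1' Hder Hf1 Hg) as Hlow.
  pose proof (convex_phi f f1' Hconv) as Hphic.
  assert (Hphin : forall t, 0 < t -> 0 <= f t + f1' * (1 - t)).
  { intros t Ht. pose proof (Hlow t Ht). assert (0 <= (t-1)^2) by apply pow2_ge_0. assert (0 <= (f0 + f1') * (t-1)^2) by (apply Rmult_le_pos; lra). lra. }
  set (c := f0 + f1') in *.
  split.
  - intros X Y P Q W PY QY DX DY CX CY kappa _ _ [HP0 HP1] [HQ0 HQ1] HPpos HQpos [x0 Hx0]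
      HW HWy HPY HQY HDX HDY HCX HCY Hk.
    unfold fdiv, chi2, output in *.
    pose proof HW as [HW0 HW1].
    assert (HQY1 : is_sum QY 1) by (apply (tonelli Q W QY 1); auto).
    assert (HPY1 : is_sum PY 1) by (apply (tonelli P W PY 1); auto).
    assert (HQYp : forall y, 0 < QY y).
    { intro y. destruct (HWy y) as [x Hx].
      pose proof (is_sum_pos (fun x => Q x * W x y) (QY y) x ltac:(intro; apply Rmult_le_pos; auto) (HQY y)).
      simpl in H. pose proof (HQpos x). nra. }
    assert (HPYp : forall y, 0 < PY y).
    { intro y. destruct (HWy y) as [x Hx].
      pose proof (is_sum_pos (fun x => P x * W x y) (PY y) x ltac:(intro; apply Rmult_le_pos; auto) (HPY y)).
      simpl in H. pose proof (HPpos x). nra. }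
    assert (HL : c * CX <= DX).
    { pose proof (is_sum_plus _ _ _ _ HDX (is_sum_scal _ f1' _ (is_sum_minus Q P 1 1 HQ1 HP1))) as S1.
      pose proof (is_sum_scal _ c _ HCX) as S2.
      pose proof (is_sum_le _ _ _ _ (fun x => pt_lower f f0 f1' (P x) (Q x) Hlow (Rlt_le _ _ (HPpos x)) (HQpos x)) S2 S1).
      lra. }
    assert (HCXp : 0 < CX).
    { assert (Hnn : forall x, 0 <= (P x - Q x)^2 / Q x).
      { intro x. apply Rmult_le_pos. apply pow2_ge_0. apply Rlt_le, Rinv_0_lt_compat; auto. }
      pose proof (is_sum_pos _ _ x0 Hnn HCX). simpl in H.
      assert (0 < (P x0 - Q x0)^2) by (destruct (Rtotal_order (P x0) (Q x0)) as [?|[?|?]]; [nra|contradiction|nra]).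
      assert (0 < (P x0 - Q x0)^2 / Q x0) by (apply Rdiv_lt_0_compat; auto). lra. }
    assert (Hkc : c <= kappa).
    { set (t0 := P x0 / Q x0).
      assert (Ht0 : 0 < t0) by (unfold t0; apply Rdiv_lt_0_compat; auto).
      assert (Ht1 : t0 <> 1). { unfold t0; intro H. apply Hx0. apply (f_equal (fun z => z * Q x0)) in H.
        replace (P x0 / Q x0 * Q x0) with (P x0) in H by (field; pose proof (HQpos x0); lra). lra. }
      set (t := (t0 + 1)/2).
      assert (HD : (t < 1 /\ exists x, P x / Q x < t) \/ (1 < t /\ exists x, t < P x / Q x)).
      { destruct (Rtotal_order t0 1) as [?|[?|?]]; [left|contradiction|right]; split; try (unfold t; lra);
        exists x0; fold t0; unfold t; lra. }
      assert (Htne : t <> 1) by (unfold t; lra).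
      pose proof (kappa_pt _ _ _ _ _ Hk HD Htne). pose proof (Hlow t ltac:(unfold t; lra)).
      assert (0 < (t-1)^2) by (destruct (Rtotal_order t 1) as [?|[?|?]]; [nra|contradiction|nra]). nra. }
    assert (HU : DY <= kappa * CY).
    { assert (Hpt : forall y, QY y * fext f f0 (PY y / QY y) <= kappa * ((PY y - QY y)^2 / QY y) + f1' * (PY y - QY y)).
      { intro y. apply pt_upper; auto.
        set (r := PY y / QY y).
        assert (Hr : 0 < r) by (unfold r; apply Rdiv_lt_0_compat; auto).
        assert (HrQ : PY y = r * QY y) by (unfold r; field; pose proof (HQYp y); lra).
        unfold fext. destruct (Rle_dec r 0) as [?|_]; [lra|].
        destruct (Req_dec r 1) as [->|Hr1]. { rewrite Hf1. nra. }
        assert (Hlo : exists x, P x / Q x <= r).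
        { apply NNPP; intro Hn. apply (wavg_gen P (fun x => r * Q x) (fun x => W x y) (PY y) (r * QY y)); auto.
          - eapply is_sum_ext; [|apply (is_sum_scal _ r _ (HQY y))]. intro; simpl; ring.
          - intro x. assert (r < P x / Q x) by (apply Rnot_le_lt; intro; apply Hn; exists x; auto).
            apply (Rmult_lt_compat_r (Q x)) in H; [|auto]. replace (P x / Q x * Q x) with (P x) in H by (field; pose proof (HQpos x); lra). lra. }
        assert (Hhi : exists x, r <= P x / Q x).
        { apply NNPP; intro Hn. apply (wavg_gen (fun x => r * Q x) P (fun x => W x y) (r * QY y) (PY y)); auto.
          - eapply is_sum_ext; [|apply (is_sum_scal _ r _ (HQY y))]. intro; simpl; ring.
          - intro x. assert (P x / Q x < r) by (apply Rnot_le_lt; intro; apply Hn; exists x; auto).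
            apply (Rmult_lt_compat_r (Q x)) in H; [|auto]. replace (P x / Q x * Q x) with (P x) in H by (field; pose proof (HQpos x); lra). lra. }
        apply (endpoint (fun t => f t + f1' * (1 - t))); auto.
        intros t Ht. apply (kappa_pt _ _ _ _ _ Hk).
        + destruct Ht as [Ht|Ht].
          * left. split; [lra|]. destruct Hlo as [x Hx]. exists x. lra.
          * right. split; [lra|]. destruct Hhi as [x Hx]. exists x. lra.
        + lra. }
      pose proof (is_sum_plus _ _ _ _ (is_sum_scal _ kappa _ HCY) (is_sum_scal _ f1' _ (is_sum_minus PY QY 1 1 HPY1 HQY1))) as S1.
      pose proof (is_sum_le _ _ _ _ Hpt HDY S1). lra. }
    assert (HCY0 : 0 <= CY).
    { apply (is_sum_ge0 (fun y => (PY y - QY y)^2/QY y)); [|exact HCY].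
      intro y; apply Rmult_le_pos; [apply pow2_ge_0| apply Rlt_le, Rinv_0_lt_compat; auto]. }
    apply final_arith; auto; lra.
  - intros X Y Q W qmin kappa muf much [l [Hl Hall]] _ [HQ0 HQ1] HQpos Hn1 HW HWy [xm Hxm] Hqle Hk Hmuf Hmuch.
    apply (proj2 Hmuf). intros r [P [PY [QY [DX [DY [[HP0 HP1] [HPY [HQY [HDX [HDX0 [HDY ->]]]]]]]]]]].
    unfold fdiv, output in *.
    pose proof HW as [HW0 HW1].
    assert (Hq0 : 0 < qmin) by (rewrite <- Hxm; auto).
    assert (Hq1 : qmin < 1).
    { pose proof (is_sum_pos Q 1 xm HQ0 HQ1). destruct (Req_dec (Q xm) 1); [exfalso; apply Hn1; exists xm; auto|]. lra. }
    assert (HPle : forall x, P x <= (1/qmin) * Q x).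
    { intro x. pose proof (is_sum_pos P 1 x HP0 HP1). pose proof (Hqle x).
      apply (Rmult_le_reg_l qmin); [lra|]. replace (qmin * (1 / qmin * Q x)) with (Q x) by (field; lra). nra. }
    set (CX := sum_list (fun x => (P x - Q x)^2 / Q x) l).
    assert (Hnn : forall x, 0 <= (P x - Q x)^2 / Q x).
    { intro x. apply Rmult_le_pos. apply pow2_ge_0. apply Rlt_le, Rinv_0_lt_compat; auto. }
    assert (HCX : is_sum (fun x => (P x - Q x)^2 / Q x) CX) by (apply is_sum_finite; auto).
    assert (HL : c * CX <= DX).
    { pose proof (is_sum_plus _ _ _ _ HDX (is_sum_scal _ f1' _ (is_sum_minus Q P 1 1 HQ1 HP1))) as S1.
      pose proof (is_sum_scal _ c _ HCX) as S2.
      pose proof (is_sum_le _ _ _ _ (fun x => pt_lower f f0 f1' (P x) (Q x) Hlow (HP0 x) (HQpos x)) S2 S1).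
      lra. }
    assert (Hx0 : exists x0, P x0 <> Q x0).
    { apply NNPP; intro Hn.
      assert (DX <= 0).
      { refine (is_sum_le _ (fun _ => 0) _ _ _ HDX is_sum_zero). intro x. simpl.
        assert (P x = Q x) by (apply NNPP; intro; apply Hn; exists x; auto).
        rewrite H. replace (Q x / Q x) with 1 by (field; pose proof (HQpos x); lra).
        unfold fext. destruct (Rle_dec 1 0); [lra|]. rewrite Hf1. lra. }
      lra. }
    destruct Hx0 as [x0 Hx0].
    assert (HCXp : 0 < CX).
    { pose proof (is_sum_pos _ _ x0 Hnn HCX). simpl in H.
      assert (0 < (P x0 - Q x0)^2) by (destruct (Rtotal_order (P x0) (Q x0)) as [?|[?|?]]; [nra|contradiction|nra]).
      assert (0 < (P x0 - Q x0)^2 / Q x0) by (apply Rdiv_lt_0_compat; auto). lra. }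
    assert (HQY1 : is_sum QY 1) by (apply (tonelli Q W QY 1); auto).
    assert (HPY1 : is_sum PY 1) by (apply (tonelli P W PY 1); auto).
    assert (HQYp : forall y, 0 < QY y).
    { intro y. destruct (HWy y) as [x Hx].
      pose proof (is_sum_pos (fun x => Q x * W x y) (QY y) x ltac:(intro; apply Rmult_le_pos; auto) (HQY y)).
      simpl in H. pose proof (HQpos x). nra. }
    assert (HPY0 : forall y, 0 <= PY y).
    { intro y. apply (is_sum_ge0 (fun x => P x * W x y)); [intro; apply Rmult_le_pos; auto| exact (HPY y)]. }
    assert (HPYle : forall y, PY y <= (1/qmin) * QY y).
    { intro y. refine (is_sum_le _ (fun x => (1/qmin) * (Q x * W x y)) _ _ _ (HPY y) (is_sum_scal _ _ _ (HQY y))).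
      intro x. pose proof (HPle x). pose proof (HW0 x y). nra. }
    assert (Hr : forall y, 0 <= PY y / QY y <= 1/qmin).
    { intro y. split. apply Rmult_le_pos; [auto| apply Rlt_le, Rinv_0_lt_compat; auto].
      apply (Rmult_le_reg_r (QY y)); [auto|]. replace (PY y / QY y * QY y) with (PY y) by (field; pose proof (HQYp y); lra). auto. }
    assert (Hkc : c <= kappa).
    { pose proof (kappa_pt _ _ _ _ (1/2) Hk ltac:(left; lra) ltac:(lra)). pose proof (Hlow (1/2) ltac:(lra)). nra. }
    assert (Hbd : forall r, 0 <= r <= 1/qmin -> fext f f0 r + f1' * (1 - r) <= kappa * (r - 1)^2).
    { intros r0 [Hr0 Hr1]. unfold fext. destruct (Rle_dec r0 0) as [Hz|Hz].
      - assert (r0 = 0) by lra. subst r0. unfold c in Hkc. nra.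
      - destruct (Req_dec r0 1) as [->|Hne]. { rewrite Hf1. nra. }
        apply (endpoint (fun t => f t + f1' * (1 - t))); auto; [lra|].
        intros t Ht. apply (kappa_pt _ _ _ _ _ Hk); [|lra].
        destruct Ht as [Ht|Ht]; [left; lra| right; lra]. }
    set (M := (1/qmin + 1)^2).
    assert (HCYe : exists CY, is_sum (fun y => (PY y - QY y)^2 / QY y) CY).
    { apply (is_sum_exists_bounded _ M).
      - intro y. apply Rmult_le_pos. apply pow2_ge_0. apply Rlt_le, Rinv_0_lt_compat; auto.
      - intros L HL0. apply Rle_trans with (sum_list (fun y => M * QY y) L).
        + apply sum_le. intro y. rewrite alg1 by auto. pose proof (Hr y). pose proof (HQYp y).
          assert ((PY y / QY y - 1)^2 <= M) by (unfold M; nra). nra.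
        + rewrite sum_scal. pose proof (is_sum_partial QY 1 L ltac:(intro; apply Rlt_le; auto) HQY1 HL0).
          assert (0 <= M) by (unfold M; apply pow2_ge_0). nra. }
    destruct HCYe as [CY HCY].
    assert (HU : DY <= kappa * CY).
    { assert (Hpt : forall y, QY y * fext f f0 (PY y / QY y) <= kappa * ((PY y - QY y)^2 / QY y) + f1' * (PY y - QY y)).
      { intro y. apply pt_upper; auto. }
      pose proof (is_sum_plus _ _ _ _ (is_sum_scal _ kappa _ HCY) (is_sum_scal _ f1' _ (is_sum_minus PY QY 1 1 HPY1 HQY1))) as S1.
      pose proof (is_sum_le _ _ _ _ Hpt HDY S1). lra. }
    assert (HCY0 : 0 <= CY).
    { apply (is_sum_ge0 (fun y => (PY y - QY y)^2/QY y)); [|exact HCY].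
      intro y; apply Rmult_le_pos; [apply pow2_ge_0| apply Rlt_le, Rinv_0_lt_compat; auto]. }
    assert (Hm : CY / CX <= much).
    { apply (proj1 Hmuch). exists P, PY, QY, CX, CY. repeat split; auto. }
    pose proof (final_arith DY DX CY CX kappa c Hpos HCXp HL HU ltac:(lra) HCY0).
    assert (0 <= kappa / c) by (apply Rmult_le_pos; [lra| apply Rlt_le, Rinv_0_lt_compat; auto]).
    replace (1 / c * kappa * much) with (kappa / c * much) by (field; lra).
    assert (kappa / c * (CY / CX) <= kappa / c * much) by (apply Rmult_le_compat_l; auto).
    lra.
Qed.
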